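(* Let $\mathcal{S}$ be a circle with one of the projective structures of the context and $\xi\in\mathrm{Vect}(\mathcal{S})$ with flow $\varphi_s$. The infinitesimal Schwarzian $\mathbf{s}(\xi)=\frac{d}{ds}\big|_{s=0}\mathbf{S}(\varphi_s)$ satisfies $\mathbf{s}(\xi)=s_1(\xi)$, where $$\mathbf{s}(\xi)=\lambda\,d\Big(\frac{d\,\mathrm{Div}\,\xi}{\lambda}\Big)\qquad\text{and}\qquad s_1(\xi)=\tfrac32\big(L_\xi\mathrm{g}_1\big)\big|_\Delta .$$
   Context: $\mathcal{S}$ is either (a) $\mathbb{R}/2\pi\mathbb{Z}$ with developing map $\Phi:\mathbb{R}\to\mathbb{R}P^1=\mathbb{R}\cup\{\infty\}$, $\Phi(\theta)=2\tan(\theta/2)$; or (b) $\mathbb{R}P^1=\mathbb{R}/\pi\mathbb{Z}$ with $\Phi(\theta)=\tan\theta$. $\lambda=\Phi^*dt$ ($t$ the affine coordinate of $\mathbb{R}P^1$), $\mathrm{Div}\,\xi=(L_\xi\lambda)/\lambda$. For $\varphi\in\mathrm{Diff}_+(\mathcal{S})$, $\tilde\varphi$ is the diffeomorphism of $\mathbb{R}P^1$ with $\tilde\varphi\circ\Phi=\Phi\circ\varphi$ and $\mathbf{S}(\varphi)=\Phi^*S(\tilde\varphi)$, $S(\tilde\varphi)=\big(\tilde\varphi'''/\tilde\varphi'-\tfrac32(\tilde\varphi''/\tilde\varphi')^2\big)dt^2$. $\mathrm{g}_1$ is the Lorentz metric on $\mathcal{S}\times\mathcal{S}-\Delta$ obtained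 by descending $(\Phi\times\Phi)^*\big(4\,dt_1dt_2/(t_1-t_2)^2\big)$; $L_\xi$ is the Lie derivative along $\xi\oplus\xi$; $L_\xi\mathrm{g}_1$ extends smoothly to the diagonal $\Delta$ and $|_\Delta$ is pullback by $\theta\mapsto(\theta,\theta)$. *)

(* Defs.v *)
(* Stdlib reals + Coquelicot.  Everything is expressed in the
   coordinate theta on the universal cover R of the circle S. *)
From Stdlib Require Import Reals List.
From Coquelicot Require Import Coquelicot.
Open Scope R_scope.

(* The two projective circles of the context:
   (a) R/2piZ with Phi(theta) = 2 tan(theta/2);  (b) RP^1 = R/piZ with Phi = tan. *)
Inductive pcircle := circle_2pi | circle_RP1.

Definition period (c : pcircle) : R :=
  match c with circle_2pi => 2 * PI | circle_RP1 => PI end.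

(* developing map (affine coordinate t of RP^1; its value at the poles is irrelevant) *)
Definition Phi (c : pcircle) (th : R) : R :=
  match c with circle_2pi => 2 * tan (th / 2) | circle_RP1 => tan th end.

(* a (principal-branch) inverse of Phi: Phi (Phi_inv c t) = t *)
Definition Phi_inv (c : pcircle) (t : R) : R :=
  match c with circle_2pi => 2 * atan (t / 2) | circle_RP1 => atan t end.

Definition Phi_finite (c : pcircle) (th : R) : Prop :=
  match c with circle_2pi => cos (th / 2) <> 0 | circle_RP1 => cos th <> 0 end.

(* lambda = Phi^* dt = lam c theta d theta *)
Definition lam (c : pcircle) (th : R) : R := Derive (Phi c) th.

Definition smooth (f : R -> R) : Prop := forall n x, ex_derive_n f n x.

Definition periodic (P : R) (f : R -> R) : Prop := forall x, f (x + P) = f x.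

(* xi = f(theta) d/dtheta is a (smooth) vector field on S *)
Definition vector_field (c : pcircle) (f : R -> R) : Prop :=
  smooth f /\ periodic (period c) f.

Definition pd1 (g : R -> R -> R) : R -> R -> R :=
  fun s t => Derive (fun s' => g s' t) s.
Definition pd2 (g : R -> R -> R) : R -> R -> R :=
  fun s t => Derive (fun t' => g s t') t.
Fixpoint pdw (w : list bool) (g : R -> R -> R) : R -> R -> R :=
  match w with
  | nil => g
  | cons b w' => (if b then pd1 else pd2) (pdw w' g)
  end.

Definition smooth2 (g : R -> R -> R) : Prop :=
  forall w s t,
    continuity_2d_pt (pdw w g) s t /\
    ex_derive (fun s' => pdw w g s' t) s /\
    ex_derive (fun t' => pdw w g s t') t.

(* phi s = phi_s is the flow of xi = f d/dtheta (lifted to the cover R) *)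
Definition is_flow (f : R -> R) (phi : R -> R -> R) : Prop :=
  smooth2 phi /\
  (forall th, phi 0 th = th) /\
  (forall s th, is_derive (fun s' => phi s' th) s (f (phi s th))).

(* classical Schwarzian derivative (coefficient of dt^2) *)
Definition schwarzian (g : R -> R) (t : R) : R :=
  Derive_n g 3 t / Derive g t - 3 / 2 * (Derive_n g 2 t / Derive g t) ^ 2.

(* tilde psi : the map of RP^1 with tilde psi o Phi = Phi o psi *)
Definition tilde_map (c : pcircle) (psi : R -> R) : R -> R :=
  fun t => Phi c (psi (Phi_inv c t)).

(* coefficient of  S(psi) = Phi^* S(tilde psi)  at theta (theta with Phi theta finite) *)
Definition Schw_bold (c : pcircle) (psi : R -> R) (th : R) : R :=
  schwarzian (tilde_map c psi) (Phi c th) * (lam c th) ^ 2.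

(* Div xi = (L_xi lambda)/lambda ;  L_xi lambda = d(iota_xi lambda) = (f lam)' dtheta *)
Definition Div (c : pcircle) (f : R -> R) (th : R) : R :=
  Derive (fun x => f x * lam c x) th / lam c th.

(* coefficient of  lambda d( d Div xi / lambda )  (a quadratic differential) *)
Definition s_formula (c : pcircle) (f : R -> R) (th : R) : R :=
  lam c th * Derive (fun x => Derive (Div c f) x / lam c x) th.

(* coefficient of g_1 = (Phi x Phi)^*( 4 dt1 dt2 / (t1 - t2)^2 ) w.r.t. dtheta1 dtheta2 *)
Definition g1 (c : pcircle) (a b : R) : R :=
  4 * lam c a * lam c b / (Phi c a - Phi c b) ^ 2.

(* coefficient of L_{xi (+) xi} g_1 w.r.t. dtheta1 dtheta2 *)
Definition Lie_g1 (c : pcircle) (f : R -> R) (a b : R) : R :=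
  f a * Derive (fun x => g1 c x b) a + f b * Derive (fun y => g1 c a y) b
  + g1 c a b * (Derive f a + Derive f b).

(* Main.v *)
Require Import Defs.
From Stdlib Require Import Reals Lra List ZArith FunctionalExtensionality Classical ClassicalEpsilon.
From Coquelicot Require Import Coquelicot.
Open Scope R_scope.

Definition aa (c : pcircle) : R := match c with circle_2pi => 2 | circle_RP1 => 1 end.
Lemma aa_pos c : 0 < aa c. Proof. destruct c; simpl; lra. Qed.
Lemma Phi_eq c : Phi c = fun x => aa c * tan (x / aa c).
Proof. apply functional_extensionality; intro x; destruct c; simpl; [reflexivity|].
  rewrite Rdiv_1_r, Rmult_1_l; reflexivity. Qed.
Lemma Phi_inv_eq c t : Phi_inv c t = aa c * atan (t / aa c).
Proof. destruct c; simpl; [reflexivity|]. rewrite Rdiv_1_r, Rmult_1_l; reflexivity. Qed.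
Lemma period_eq c : period c = aa c * PI.
Proof. destruct c; simpl; ring. Qed.
Lemma finite_eq c x : Phi_finite c x -> cos (x / aa c) <> 0.
Proof. destruct c; simpl; [auto|]. rewrite Rdiv_1_r; auto. Qed.

Lemma tan_deriv y : cos y <> 0 -> is_derive tan y (1 + tan y ^ 2).
Proof. intro H. unfold tan. auto_derive. exact H. field. exact H. Qed.
Lemma ex_derive_tan y : cos y <> 0 -> ex_derive (fun x => tan x) y.
Proof. intro H; eexists; apply tan_deriv; exact H. Qed.
Lemma Derive_tan y : cos y <> 0 -> Derive (fun x => tan x) y = 1 + tan y ^ 2.
Proof. intro H; apply is_derive_unique, tan_deriv, H. Qed.

Definition L1 a x := 1 + tan (x/a) ^ 2.
Definition L2 a x := 2 * tan (x/a) * (1 + tan (x/a)^2) / a.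
Definition L3 a x := 2 * (1 + 3 * tan (x/a)^2) * (1 + tan(x/a)^2) / a^2.
Definition L4 a x := 8 * tan (x/a) * (2 + 3 * tan(x/a)^2) * (1 + tan(x/a)^2) / a^3.

Ltac tand Hc := unfold Rdiv in *; auto_derive;
  [ repeat split; apply ex_derive_tan; exact Hc
  | rewrite ?(Derive_tan _ Hc); field; auto ].

Lemma L12 a x : a <> 0 -> cos (x/a) <> 0 -> is_derive (L1 a) x (L2 a x).
Proof. intros Ha Hc. unfold L1, L2. tand Hc. Qed.
Lemma L23 a x : a <> 0 -> cos (x/a) <> 0 -> is_derive (L2 a) x (L3 a x).
Proof. intros Ha Hc. unfold L2, L3. tand Hc. Qed.
Lemma L34 a x : a <> 0 -> cos (x/a) <> 0 -> is_derive (L3 a) x (L4 a x).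
Proof. intros Ha Hc. unfold L3, L4. tand Hc. Qed.
Lemma L4_ex a x : a <> 0 -> cos (x/a) <> 0 -> ex_derive (L4 a) x.
Proof. intros Ha Hc. unfold L4. unfold Rdiv in *; auto_derive. repeat split; apply ex_derive_tan; exact Hc. Qed.
Lemma P1 a x : a <> 0 -> cos (x/a) <> 0 -> is_derive (fun x => a * tan (x/a)) x (L1 a x).
Proof. intros Ha Hc. unfold L1. tand Hc. Qed.
Lemma locally_neq0 (g : R -> R) x : continuous g x -> g x <> 0 -> locally x (fun y => g y <> 0).
Proof.
  intros H Hx. apply (H (fun z => z <> 0)).
  assert (Hp : 0 < Rabs (g x)) by (apply Rabs_pos_lt; exact Hx).
  exists (mkposreal _ Hp). intros z Hz Hz0. subst z.
  unfold ball in Hz; simpl in Hz; unfold AbsRing_ball, abs, minus, plus, opp in Hz; simpl in Hz.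
  rewrite Rplus_0_l, Rabs_Ropp in Hz. lra.
Qed.
Lemma U_open a y : cos (y/a) <> 0 -> locally y (fun z => cos (z/a) <> 0).
Proof.
  intro H. apply (locally_neq0 (fun z => cos (z/a))); [|exact H].
  assert (Hd : ex_derive (fun z => cos (z/a)) y) by (unfold Rdiv; auto_derive; exact I).
  exact (ex_derive_continuous _ _ Hd).
Qed.

Lemma lam_eq c x : cos (x / aa c) <> 0 -> lam c x = L1 (aa c) x.
Proof. intro H. unfold lam. rewrite Phi_eq. apply is_derive_unique, P1; [apply Rgt_not_eq, aa_pos | exact H]. Qed.
Lemma lam_loc c x : cos (x / aa c) <> 0 -> locally x (fun y => lam c y = L1 (aa c) y).
Proof. intro H. apply (filter_imp (fun y => cos (y / aa c) <> 0)); [intros; apply lam_eq; auto | apply U_open, H]. Qed.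

Section Fs.
Variable f : R -> R.
Hypothesis hs : smooth f.
Variable a : R.
Hypothesis ha : a <> 0.

Definition fd (k : nat) (x : R) := Derive_n f k x.
Lemma fd_eq k x : fd k x = Derive_n f k x.
Proof. reflexivity. Qed.
Lemma fk_ex k x : ex_derive (fun y => fd k y) x.
Proof. exact (hs (S k) x). Qed.
Lemma fk_D k x : Derive (fun y => fd k y) x = fd (S k) x.
Proof. reflexivity. Qed.
Lemma f_ex x : ex_derive (fun y => f y) x.
Proof. exact (hs 1%nat x). Qed.
Lemma f_D x : Derive (fun y => f y) x = fd 1 x.
Proof. reflexivity. Qed.
Lemma fk_is k x : is_derive (fun y => fd k y) x (fd (S k) x).
Proof. rewrite <- fk_D. apply Derive_correct, fk_ex. Qed.
Lemma Df x : Derive f x = fd 1 x.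
Proof. reflexivity. Qed.
Lemma f_is x : is_derive (fun y => f y) x (fd 1 x).
Proof. rewrite <- f_D. apply Derive_correct, f_ex. Qed.
Opaque fd.

Definition A1 x := fd 1 x * L1 a x + f x * L2 a x.
Definition A2 x := fd 2 x * L1 a x + 2 * fd 1 x * L2 a x + f x * L3 a x.
Definition A3 x := fd 3 x * L1 a x + 3 * fd 2 x * L2 a x
   + 3 * fd 1 x * L3 a x + f x * L4 a x.
Definition Dd x := A1 x / L1 a x.
Definition D1 x := (A2 x - Dd x * L2 a x) / L1 a x.
Definition D2 x := (A3 x - 2 * D1 x * L2 a x - Dd x * L3 a x) / L1 a x.
Definition EE x := (D2 x * L1 a x - D1 x * L2 a x) / (L1 a x) ^ 2.

Lemma L1_pos x : 0 < L1 a x.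
Proof. unfold L1. pose proof (pow2_ge_0 (tan (x/a))). lra. Qed.
Lemma L1_nz x : L1 a x <> 0.
Proof. apply Rgt_not_eq, L1_pos. Qed.

Lemma L1_D x : cos (x/a) <> 0 -> Derive (fun y => L1 a y) x = L2 a x.
Proof. intro Hc; apply is_derive_unique, L12; auto. Qed.
Lemma L2_D x : cos (x/a) <> 0 -> Derive (fun y => L2 a y) x = L3 a x.
Proof. intro Hc; apply is_derive_unique, L23; auto. Qed.
Lemma L3_D x : cos (x/a) <> 0 -> Derive (fun y => L3 a y) x = L4 a x.
Proof. intro Hc; apply is_derive_unique, L34; auto. Qed.

Ltac rwD Hc := repeat match goal with
  | |- context [Derive (fun y => fd ?k y) ?x] => rewrite (fk_D k x)
  | |- context [Derive (fun y => f y) ?x] => rewrite (f_D x)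
  | |- context [Derive (fun y => L1 a y) ?x] => rewrite (L1_D x Hc)
  | |- context [Derive (fun y => L2 a y) ?x] => rewrite (L2_D x Hc)
  | |- context [Derive (fun y => L3 a y) ?x] => rewrite (L3_D x Hc)
  end.

Ltac sideD := repeat split; try match goal with
  | |- ex_derive (fun y => fd _ y) _ => apply fk_ex
  | |- ex_derive (fun y => f y) _ => apply f_ex
  | |- ex_derive (fun y => L1 a y) _ => eexists; apply L12; auto
  | |- ex_derive (fun y => L2 a y) _ => eexists; apply L23; auto
  | |- ex_derive (fun y => L3 a y) _ => eexists; apply L34; auto
  | |- L1 a _ <> 0 => apply L1_nz
  end.

Ltac ffd Hc := auto_derive; [ sideD | rwD Hc;
    unfold EE, D2, D1, Dd, A3, A2, A1; field; apply L1_nz ].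

Lemma dA x : cos (x/a) <> 0 -> is_derive (fun y => f y * L1 a y) x (A1 x).
Proof. intro Hc. ffd Hc. Qed.
Lemma dD x : cos (x/a) <> 0 -> is_derive Dd x (D1 x).
Proof. intro Hc. unfold Dd, A1. ffd Hc. Qed.
Lemma dD1 x : cos (x/a) <> 0 -> is_derive D1 x (D2 x).
Proof. intro Hc. unfold D1, Dd, A1, A2. ffd Hc. Qed.
Lemma dM x : cos (x/a) <> 0 -> is_derive (fun y => D1 y / L1 a y) x (EE x).
Proof. intro Hc. unfold D1, Dd, A1, A2. ffd Hc. Qed.
End Fs.

Lemma Dd_D f (hs : smooth f) a x : a <> 0 -> cos (x/a) <> 0 -> Derive (fun y => Dd f a y) x = D1 f a x.
Proof. intros; apply is_derive_unique, dD; auto. Qed.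
Lemma D1_D f (hs : smooth f) a x : a <> 0 -> cos (x/a) <> 0 -> Derive (fun y => D1 f a y) x = D2 f a x.
Proof. intros; apply is_derive_unique, dD1; auto. Qed.

Lemma aa_nz c : aa c <> 0.
Proof. apply Rgt_not_eq, aa_pos. Qed.

Lemma Div_eq c f (hs : smooth f) y : cos (y / aa c) <> 0 -> Div c f y = Dd f (aa c) y.
Proof.
  intro Hc. unfold Div. rewrite (lam_eq c y Hc).
  assert (HD : Derive (fun x => f x * lam c x) y = A1 f (aa c) y).
  { rewrite (Derive_ext_loc _ (fun x => f x * L1 (aa c) x)).
  - apply is_derive_unique, dA; auto using aa_nz.
  - apply (filter_imp (fun x => lam c x = L1 (aa c) x)); [intros x Hx; rewrite Hx; reflexivity | apply lam_loc, Hc]. }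
  rewrite HD. reflexivity.
Qed.

Lemma DDiv_eq c f (hs : smooth f) y : cos (y / aa c) <> 0 -> Derive (Div c f) y = D1 f (aa c) y.
Proof.
  intro Hc. rewrite (Derive_ext_loc _ (Dd f (aa c))).
  - apply is_derive_unique, dD; auto using aa_nz.
  - apply (filter_imp (fun x => cos (x / aa c) <> 0)); [intros x Hx; apply Div_eq; auto | apply U_open, Hc].
Qed.

Lemma s_formula_eq c f (hs : smooth f) th : cos (th / aa c) <> 0 ->
  s_formula c f th = L1 (aa c) th * EE f (aa c) th.
Proof.
  intro Hc. unfold s_formula. rewrite (lam_eq c th Hc). f_equal.
  rewrite (Derive_ext_loc _ (fun y => D1 f (aa c) y / L1 (aa c) y)).
  - apply is_derive_unique, dM; auto using aa_nz.
  - apply (filter_imp (fun x => cos (x / aa c) <> 0)); [intros x Hx | apply U_open, Hc].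
    rewrite DDiv_eq, lam_eq; auto.
Qed.

Lemma ball_R (x e y : R) : ball x e y <-> Rabs (y - x) < e.
Proof. unfold ball; simpl; unfold AbsRing_ball, abs, minus, plus, opp; simpl. tauto. Qed.
Lemma ball_prod (x y e : R) (p : R * R) : ball (x, y) e p <-> ball x e (fst p) /\ ball y e (snd p).
Proof. destruct p. unfold ball; simpl. unfold prod_ball. simpl. tauto. Qed.

Definition Pa a x := a * tan (x / a).
Lemma Phi_Pa c : Phi c = Pa (aa c).
Proof. rewrite Phi_eq. reflexivity. Qed.
Lemma Pa_is a x : a <> 0 -> cos (x/a) <> 0 -> is_derive (fun y => Pa a y) x (L1 a x).
Proof. intros. apply P1; auto. Qed.
Lemma Pa_D a x : a <> 0 -> cos (x/a) <> 0 -> Derive (fun y => Pa a y) x = L1 a x.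
Proof. intros. apply is_derive_unique, Pa_is; auto. Qed.

Section Lie.
Variable c : pcircle.
Local Notation a := (aa c).
Variable f : R -> R.
Hypothesis hs : smooth f.

Lemma L1_D' x : cos (x/a) <> 0 -> Derive (fun y => L1 a y) x = L2 a x.
Proof. intro Hc; apply is_derive_unique, L12; auto using aa_nz. Qed.

Lemma g1_Da (x b : R) : cos (x/a) <> 0 -> cos (b/a) <> 0 -> Pa a x <> Pa a b ->
  Derive (fun y => g1 c y b) x =
  4 * L2 a x * L1 a b / (Pa a x - Pa a b)^2 - 8 * L1 a x ^2 * L1 a b / (Pa a x - Pa a b)^3.
Proof.
  intros Hx Hb Hne.
  rewrite (Derive_ext_loc _ (fun y => 4 * L1 a y * L1 a b / (Pa a y - Pa a b)^2)).
  - apply is_derive_unique. auto_derive.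
    + repeat split. eexists; apply L12; auto using aa_nz. eexists; apply Pa_is; auto using aa_nz.
      intro H0. apply Hne. nra.
    + rewrite L1_D', Pa_D by auto using aa_nz. field. intro H0; apply Hne; lra.
  - apply (filter_imp (fun y => cos (y / a) <> 0)); [intros y Hy | apply U_open, Hx].
    unfold g1. rewrite Phi_Pa, !lam_eq by auto. reflexivity.
Qed.

Lemma g1_Db (x b : R) : cos (x/a) <> 0 -> cos (b/a) <> 0 -> Pa a x <> Pa a b ->
  Derive (fun y => g1 c x y) b =
  4 * L1 a x * L2 a b / (Pa a x - Pa a b)^2 + 8 * L1 a x * L1 a b ^ 2 / (Pa a x - Pa a b)^3.
Proof.
  intros Hx Hb Hne.
  rewrite (Derive_ext_loc _ (fun y => 4 * L1 a x * L1 a y / (Pa a x - Pa a y)^2)).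
  - apply is_derive_unique. auto_derive.
    + repeat split. eexists; apply L12; auto using aa_nz. eexists; apply Pa_is; auto using aa_nz.
      intro H0. apply Hne. nra.
    + rewrite L1_D', Pa_D by auto using aa_nz. field. intro H0; apply Hne; lra.
  - apply (filter_imp (fun y => cos (y / a) <> 0)); [intros y Hy | apply U_open, Hb].
    unfold g1. rewrite Phi_Pa, !lam_eq by auto. reflexivity.
Qed.

Definition Nn x b := -2 * (f x * L1 a x - f b * L1 a b) + (Pa a x - Pa a b) * (Dd f a x + Dd f a b).

Lemma Lie_eq x b : cos (x/a) <> 0 -> cos (b/a) <> 0 -> Pa a x <> Pa a b ->
  Lie_g1 c f x b = 4 * L1 a x * L1 a b * Nn x b / (Pa a x - Pa a b)^3.
Proof.
  intros Hx Hb Hne. unfold Lie_g1. rewrite g1_Da, g1_Db by auto.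
  unfold g1. rewrite Phi_Pa, !lam_eq by auto. rewrite !Df.
  unfold Nn, Dd, A1. field. split; [apply L1_nz|split; [apply L1_nz|]]. intro H0; apply Hne; lra.
Qed.
End Lie.

Lemma rolle (g g' : R -> R) u v : u <> v ->
  (forall x, Rmin u v <= x <= Rmax u v -> is_derive g x (g' x)) -> g u = g v ->
  exists z, Rmin u v < z < Rmax u v /\ g' z = 0.
Proof.
  intros Huv Hd Heq. destruct (Rlt_or_le u v) as [Hl|Hl].
  - destruct (MVT_cor2 g g' u v Hl) as [z [Hz1 Hz2]].
    + intros z Hz. apply is_derive_Reals, Hd. rewrite Rmin_left, Rmax_right by lra. exact Hz.
    + exists z. rewrite Rmin_left, Rmax_right by lra. split; [exact Hz2|].
      rewrite Heq in Hz1. assert (g' z * (v - u) = 0) by lra.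
      destruct (Rmult_integral _ _ H); [assumption| lra].
  - assert (Hl' : v < u) by lra.
    destruct (MVT_cor2 g g' v u Hl') as [z [Hz1 Hz2]].
    + intros z Hz. apply is_derive_Reals, Hd. rewrite Rmin_right, Rmax_left by lra. exact Hz.
    + exists z. rewrite Rmin_right, Rmax_left by lra. split; [exact Hz2|].
      rewrite Heq in Hz1. assert (g' z * (u - v) = 0) by lra.
      destruct (Rmult_integral _ _ H); [assumption| lra].
Qed.

Lemma between_ball th d x y z : Rabs (x - th) < d -> Rabs (y - th) < d ->
  Rmin x y <= z <= Rmax x y -> Rabs (z - th) < d.
Proof.
  intros Hx Hy Hz. apply Rabs_def2 in Hx. apply Rabs_def2 in Hy.
  apply Rabs_def1; unfold Rmin, Rmax in Hz; destruct (Rle_dec x y); lra.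
Qed.

Section MV.
Variable c : pcircle.
Local Notation a := (aa c).
Variable f : R -> R.
Hypothesis hs : smooth f.
Variables (th d : R).
Hypothesis hd : forall y, Rabs (y - th) < d -> cos (y / a) <> 0.

Lemma Pa_inj x y : Rabs (x - th) < d -> Rabs (y - th) < d -> x <> y -> Pa a x <> Pa a y.
Proof.
  intros Hx Hy Hxy He.
  destruct (rolle (Pa a) (L1 a) x y Hxy) as [z [_ Hz]].
  - intros z Hz. apply Pa_is; auto using aa_nz. apply hd, (between_ball th d x y z); auto.
  - exact He.
  - exact (L1_nz _ z Hz).
Qed.

Ltac sideM Hy := repeat split; try match goal with
  | |- ex_derive (fun y => f y) _ => apply (f_ex f hs)
  | |- ex_derive (fun y => L1 _ y) _ => eexists; apply L12; [apply aa_nz | exact Hy]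
  | |- ex_derive (fun y => Pa _ y) _ => eexists; apply Pa_is; [apply aa_nz | exact Hy]
  | |- ex_derive (fun y => Dd _ _ y) _ => eexists; apply dD; [exact hs | apply aa_nz | exact Hy]
  | |- ex_derive (fun y => D1 _ _ y) _ => eexists; apply dD1; [exact hs | apply aa_nz | exact Hy]
  | |- L1 _ _ <> 0 => apply L1_nz
  end.

Lemma Lie_mv x b : Rabs (x - th) < d -> Rabs (b - th) < d -> x <> b ->
  exists z, Rmin x b <= z <= Rmax x b /\
    Lie_g1 c f x b = 2 / 3 * L1 a x * L1 a b * (EE f a z / L1 a z).
Proof.
  intros Hx Hb Hxb.
  assert (HP : Pa a x <> Pa a b) by (apply Pa_inj; auto).
  assert (HP' : Pa a x - Pa a b <> 0) by (intro; apply HP; lra).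
  set (K := Nn c f x b / (Pa a x - Pa a b)^3).
  set (phi := fun y => -2 * (f y * L1 a y - f b * L1 a b) + (Pa a y - Pa a b) * (Dd f a y + Dd f a b)
                - K * (Pa a y - Pa a b)^3).
  set (psi := fun y => Dd f a b - Dd f a y + (Pa a y - Pa a b) * (D1 f a y / L1 a y)
                - 3 * K * (Pa a y - Pa a b)^2).
  assert (Hphi : forall y, cos (y/a) <> 0 -> is_derive phi y (L1 a y * psi y)).
  { intros y Hy. unfold phi, psi. auto_derive.
    - sideM Hy.
    - rewrite (f_D f y), (L1_D' c y Hy), (Pa_D _ _ (aa_nz c) Hy), (Dd_D f hs _ y (aa_nz c) Hy).
      unfold D1, Dd, A1. field. repeat split; apply L1_nz. }
  assert (Hpsi : forall y, cos (y/a) <> 0 -> is_derive psi y ((Pa a y - Pa a b) * (EE f a y - 6 * K * L1 a y))).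
  { intros y Hy. unfold psi. auto_derive.
    - sideM Hy.
    - rewrite (L1_D' c y Hy), (Pa_D _ _ (aa_nz c) Hy), (Dd_D f hs _ y (aa_nz c) Hy), (D1_D f hs _ y (aa_nz c) Hy).
      unfold EE. field. repeat split; apply L1_nz. }
  assert (Hin : forall z, Rmin x b <= z <= Rmax x b -> cos (z/a) <> 0).
  { intros z Hz. apply hd, (between_ball th d x b z); auto. }
  destruct (rolle phi (fun y => L1 a y * psi y) x b Hxb) as [eta [Heta Heta0]].
  { intros z Hz. apply Hphi, Hin, Hz. }
  { unfold phi, K; cbv beta. unfold Nn. field. exact HP'. }
  assert (Hpe : psi eta = 0).
  { destruct (Rmult_integral _ _ Heta0) as [H0|H0]; [exfalso; exact (L1_nz _ _ H0) | exact H0]. }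
  assert (Heb : eta <> b) by (intro; subst; unfold Rmin, Rmax in Heta; destruct (Rle_dec x b); lra).
  destruct (rolle psi (fun y => (Pa a y - Pa a b) * (EE f a y - 6 * K * L1 a y)) eta b Heb) as [z [Hz Hz0]].
  { intros z Hz. apply Hpsi, Hin. unfold Rmin, Rmax in *; destruct (Rle_dec x b); destruct (Rle_dec eta b); lra. }
  { rewrite Hpe. unfold psi; cbv beta. ring. }
  assert (Hzr : Rmin x b <= z <= Rmax x b).
  { unfold Rmin, Rmax in *; destruct (Rle_dec x b); destruct (Rle_dec eta b); lra. }
  assert (Hzb : z <> b) by (intro; subst; unfold Rmin, Rmax in Hz; destruct (Rle_dec eta b); lra).
  assert (HPz : Pa a z - Pa a b <> 0).
  { intro H0. apply (Pa_inj z b); auto; [ apply (between_ball th d x b z); auto | lra ]. }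
  destruct (Rmult_integral _ _ Hz0) as [H0|H0]; [exfalso; exact (HPz H0)|].
  exists z. split; [exact Hzr|].
  rewrite Lie_eq; auto.
  assert (HK : K = EE f a z / (6 * L1 a z)).
  { field_simplify_eq; [|apply L1_nz]. lra. }
  replace (Nn c f x b) with (K * (Pa a x - Pa a b)^3) by (unfold K; field; exact HP').
  rewrite HK. field. split; [apply L1_nz | exact HP'].
Qed.
End MV.

Lemma lim_lemma (F : R * R -> R) (l m : R -> R) th d :
  0 < d -> continuous l th -> continuous m th ->
  (forall x b, Rabs (x - th) < d -> Rabs (b - th) < d -> x <> b ->
      exists z, Rmin x b <= z <= Rmax x b /\ F (x, b) = 2/3 * l x * l b * m z) ->
  filterlim F (within (fun p : R * R => fst p <> snd p) (locally (th, th)))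
    (locally (2/3 * l th * l th * m th)).
Proof.
  intros Hd Hl Hm H.
  set (FF := within (fun p : R * R => fst p <> snd p) (locally (th, th))).
  assert (Hex : forall p : R * R, exists z, Rabs (fst p - th) < d -> Rabs (snd p - th) < d -> fst p <> snd p ->
     Rmin (fst p) (snd p) <= z <= Rmax (fst p) (snd p) /\ F p = 2/3 * l (fst p) * l (snd p) * m z).
  { intros [x b]. simpl.
    destruct (classic (Rabs (x - th) < d /\ Rabs (b - th) < d /\ x <> b)) as [[h1 [h2 h3]]|hn].
    - destruct (H x b h1 h2 h3) as [z Hz]. exists z. intros; exact Hz.
    - exists th. intros h1 h2 h3. exfalso; apply hn; auto. }
  set (zf := fun p => proj1_sig (constructive_indefinite_description _ (Hex p))).
  assert (Hzf : forall p, Rabs (fst p - th) < d -> Rabs (snd p - th) < d -> fst p <> snd p ->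
     Rmin (fst p) (snd p) <= zf p <= Rmax (fst p) (snd p) /\ F p = 2/3 * l (fst p) * l (snd p) * m (zf p)).
  { intro p. unfold zf. destruct (constructive_indefinite_description _ (Hex p)) as [z Hz]. exact Hz. }
  assert (H1 : filterlim (fun p : R * R => fst p) FF (locally th)).
  { apply filterlim_locally. intro eps. exists eps. intros p Hp _. destruct Hp as [Hp1 Hp2]; assumption. }
  assert (H2 : filterlim (fun p : R * R => snd p) FF (locally th)).
  { apply filterlim_locally. intro eps. exists eps. intros p Hp _. destruct Hp as [Hp1 Hp2]; assumption. }
  assert (H3 : filterlim zf FF (locally th)).
  { apply filterlim_locally. intro eps.
    assert (Hm0 : 0 < Rmin eps d) by (apply Rmin_pos; [apply cond_pos | exact Hd]).
    exists (mkposreal _ Hm0). intros p Hp Hne. destruct Hp as [Hp1 Hp2].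
    apply (proj1 (ball_R _ _ _)) in Hp1; apply (proj1 (ball_R _ _ _)) in Hp2. simpl in Hp1, Hp2.
    assert (Hmd : Rmin eps d <= d) by apply Rmin_r.
    assert (Hme : Rmin eps d <= eps) by apply Rmin_l.
    destruct (Hzf p) as [Hz _]; try lra.
    apply ball_R. apply (Rlt_le_trans _ (Rmin eps d)); [|exact Hme].
    destruct p as [x b]; simpl in *.
    apply Rabs_def2 in Hp1; apply Rabs_def2 in Hp2. apply Rabs_def1; unfold Rmin, Rmax in Hz;
      destruct (Rle_dec x b); lra. }
  apply (filterlim_ext_loc (fun p => 2/3 * l (fst p) * l (snd p) * m (zf p))).
  - exists (mkposreal _ Hd). intros p Hp Hne. destruct Hp as [Hp1 Hp2].
    apply (proj1 (ball_R _ _ _)) in Hp1; apply (proj1 (ball_R _ _ _)) in Hp2. simpl in Hp1, Hp2.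
    symmetry. apply Hzf; auto.
  - assert (Hl1 : filterlim (fun p : R*R => l (fst p)) FF (locally (l th))) by (eapply filterlim_comp; [exact H1 | exact Hl]).
    assert (Hl2 : filterlim (fun p : R*R => l (snd p)) FF (locally (l th))) by (eapply filterlim_comp; [exact H2 | exact Hl]).
    assert (Hm3 : filterlim (fun p : R*R => m (zf p)) FF (locally (m th))) by (eapply filterlim_comp; [exact H3 | exact Hm]).
    assert (Hc : filterlim (fun _ : R * R => 2/3) FF (locally (2/3))) by apply filterlim_const.
    assert (Ha := filterlim_comp_2 _ _ Rmult Hc Hl1 (filterlim_mult (K := R_AbsRing) (2/3) (l th))).
    assert (Hb := filterlim_comp_2 _ _ Rmult Ha Hl2 (filterlim_mult (K := R_AbsRing) _ (l th))).
    exact (filterlim_comp_2 _ _ Rmult Hb Hm3 (filterlim_mult (K := R_AbsRing) _ (m th))).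
Qed.

Lemma EE_ex f (hs : smooth f) a x : a <> 0 -> cos (x/a) <> 0 -> ex_derive (fun z => EE f a z / L1 a z) x.
Proof.
  intros Ha Hc. unfold EE, D2, A3. auto_derive.
  repeat split; try match goal with
  | |- ex_derive (fun y => f y) _ => apply (f_ex f hs)
  | |- ex_derive (fun y => fd _ _ y) _ => apply (fk_ex f hs)
  | |- ex_derive (fun y => Derive (fd _ ?k) y) _ => exact (fk_ex f hs (S k) _)
  | |- ex_derive (fun y => L1 _ y) _ => eexists; apply L12; [exact Ha | exact Hc]
  | |- ex_derive (fun y => L2 _ y) _ => eexists; apply L23; [exact Ha | exact Hc]
  | |- ex_derive (fun y => L3 _ y) _ => eexists; apply L34; [exact Ha | exact Hc]
  | |- ex_derive (fun y => L4 _ y) _ => apply L4_ex; [exact Ha | exact Hc]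
  | |- ex_derive (fun y => Dd _ _ y) _ => eexists; apply dD; [exact hs | exact Ha | exact Hc]
  | |- ex_derive (fun y => D1 _ _ y) _ => eexists; apply dD1; [exact hs | exact Ha | exact Hc]
  | |- L1 _ _ <> 0 => apply L1_nz
  | |- _ <> 0 => let H := fresh in intro H; apply (L1_nz a x); nra
  end.
Qed.

Lemma part2 c f (hs : smooth f) th : cos (th / aa c) <> 0 ->
  exists v : R,
    filterlim (fun p : R * R => Lie_g1 c f (fst p) (snd p))
      (within (fun p : R * R => fst p <> snd p) (locally (th, th)))
      (locally v) /\
    s_formula c f th = 3 / 2 * v.
Proof.
  intro Hc. destruct (U_open _ _ Hc) as [d Hd].
  exists (2/3 * L1 (aa c) th * L1 (aa c) th * (EE f (aa c) th / L1 (aa c) th)). split.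
  - apply (lim_lemma (fun p => Lie_g1 c f (fst p) (snd p)) (L1 (aa c)) (fun z => EE f (aa c) z / L1 (aa c) z) th d).
    + apply cond_pos.
    + assert (H0 : ex_derive (L1 (aa c)) th) by (eexists; apply L12; auto using aa_nz).
      exact (ex_derive_continuous _ _ H0).
    + assert (H0 := EE_ex f hs (aa c) th (aa_nz c) Hc).
      exact (ex_derive_continuous _ _ H0).
    + intros x b Hx Hb Hxb. simpl.
      apply (Lie_mv c f hs th d); [ | exact Hx | exact Hb | exact Hxb].
      intros y Hy. apply Hd. apply (proj2 (ball_R _ _ _)). exact Hy.
  - rewrite s_formula_eq by auto. field. apply L1_nz.
Qed.



Definition chain3 (V : R -> Prop) (F F1 F2 F3 : R -> R) :=
  forall y, V y -> is_derive F y (F1 y) /\ is_derive F1 y (F2 y) /\ is_derive F2 y (F3 y).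

Lemma D_of (F : R -> R) y l : is_derive F y l -> Derive (fun x => F x) y = l.
Proof. intro H. apply is_derive_unique. exact H. Qed.
Lemma ex_of (F : R -> R) y l : is_derive F y l -> ex_derive (fun x => F x) y.
Proof. intro H. exists l. exact H. Qed.

Lemma dcomp (f g : R -> R) x df dg : is_derive f (g x) df -> is_derive g x dg ->
  is_derive (fun t => f (g t)) x (df * dg).
Proof. intros H1 H2. pose proof (is_derive_comp f g x df dg H1 H2) as H. rewrite Rmult_comm. exact H. Qed.

Lemma chain3_comp U V A A1 A2 A3 B B1 B2 B3 :
  chain3 U A A1 A2 A3 -> chain3 V B B1 B2 B3 -> (forall y, V y -> U (B y)) ->
  chain3 V (fun t => A (B t)) (fun t => A1 (B t) * B1 t)
    (fun t => A2 (B t) * B1 t ^ 2 + A1 (B t) * B2 t)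
    (fun t => A3 (B t) * B1 t ^ 3 + 3 * A2 (B t) * B1 t * B2 t + A1 (B t) * B3 t).
Proof.
  intros HA HB HUV y Hy. destruct (HB y Hy) as [hb1 [hb2 hb3]].
  destruct (HA (B y) (HUV y Hy)) as [ha1 [ha2 ha3]].
  pose (c0 := fun t => A (B t)). pose (c1 := fun t => A1 (B t)). pose (c2 := fun t => A2 (B t)).
  assert (h0 : is_derive c0 y (A1 (B y) * B1 y)) by exact (dcomp A B y _ _ ha1 hb1).
  assert (h1 : is_derive c1 y (A2 (B y) * B1 y)) by exact (dcomp A1 B y _ _ ha2 hb1).
  assert (h2 : is_derive c2 y (A3 (B y) * B1 y)) by exact (dcomp A2 B y _ _ ha3 hb1).
  split; [exact h0|]. split.
  - change (is_derive (fun t => c1 t * B1 t) y (c2 y * B1 y ^ 2 + c1 y * B2 y)).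
    auto_derive.
    + repeat split; first [ exact (ex_of _ _ _ h1) | exact (ex_of _ _ _ hb2) ].
    + rewrite (D_of _ _ _ h1), (D_of _ _ _ hb2). unfold c2, c1. ring.
  - change (is_derive (fun t => c2 t * B1 t ^ 2 + c1 t * B2 t) y
       (A3 (B y) * B1 y ^ 3 + 3 * c2 y * B1 y * B2 y + c1 y * B3 y)).
    auto_derive.
    + repeat split; first [ exact (ex_of _ _ _ h1) | exact (ex_of _ _ _ h2) | exact (ex_of _ _ _ hb2) | exact (ex_of _ _ _ hb3) ].
    + rewrite (D_of _ _ _ h1), (D_of _ _ _ h2), (D_of _ _ _ hb2), (D_of _ _ _ hb3). unfold c2, c1. ring.
Qed.

Lemma chain3_Dn V F F1 F2 F3 t0 : chain3 V F F1 F2 F3 -> locally t0 V ->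
  Derive F t0 = F1 t0 /\ Derive_n F 2 t0 = F2 t0 /\ Derive_n F 3 t0 = F3 t0.
Proof.
  intros HC HV.
  assert (H1 : locally t0 (fun y => Derive F y = F1 y)).
  { apply (filter_imp V); [intros y Hy; apply is_derive_unique, (HC y Hy) | exact HV]. }
  assert (H2 : locally t0 (fun y => Derive (fun x => Derive F x) y = F2 y)).
  { apply (filter_imp (fun y => locally y V)); [| apply locally_locally, HV].
    intros y Hy. rewrite (Derive_ext_loc _ F1).
    - apply is_derive_unique. apply HC. apply locally_singleton, Hy.
    - apply (filter_imp V); [intros z Hz; apply is_derive_unique, (HC z Hz) | exact Hy]. }
  split; [apply is_derive_unique, HC, locally_singleton, HV|].
  split.
  - change (Derive (Derive F) t0 = F2 t0). rewrite (Derive_ext_loc _ F1 _ H1).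
    apply is_derive_unique, HC, locally_singleton, HV.
  - change (Derive (Derive (fun x => Derive F x)) t0 = F3 t0). rewrite (Derive_ext_loc _ F2 _ H2).
    apply is_derive_unique, HC, locally_singleton, HV.
Qed.



Lemma pdw_app w w' g : pdw (w ++ w') g = pdw w (pdw w' g).
Proof. induction w as [|b w IH]; simpl; [reflexivity|]. rewrite IH. reflexivity. Qed.

Lemma smooth2_pd2 g : smooth2 g -> smooth2 (pd2 g).
Proof. intros H w s t. generalize (H (w ++ false :: nil) s t). rewrite pdw_app. simpl. auto. Qed.
Lemma smooth2_pd1 g : smooth2 g -> smooth2 (pd1 g).
Proof. intros H w s t. generalize (H (w ++ true :: nil) s t). rewrite pdw_app. simpl. auto. Qed.

Lemma schwarz_pt g s t : smooth2 g -> pd1 (pd2 g) s t = pd2 (pd1 g) s t.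
Proof.
  intro H. unfold pd1, pd2. apply Schwarz.
  - exists (mkposreal 1 Rlt_0_1). intros u v _ _.
    split; [exact (proj1 (proj2 (H nil u v)))|].
    split; [exact (proj2 (proj2 (H nil u v)))|].
    split; [exact (proj1 (proj2 (H (false :: nil) u v)))|].
    exact (proj2 (proj2 (H (true :: nil) u v))).
  - exact (proj1 (H (true :: false :: nil) s t)).
  - exact (proj1 (H (false :: true :: nil) s t)).
Qed.

Lemma schwarz_fun g : smooth2 g -> pd1 (pd2 g) = pd2 (pd1 g).
Proof. intro H. apply functional_extensionality; intro s; apply functional_extensionality; intro t.
  apply schwarz_pt, H. Qed.

Lemma is_d2 g s y : smooth2 g -> is_derive (fun t => g s t) y (pd2 g s y).
Proof. intro H. apply Derive_correct. exact (proj2 (proj2 (H nil s y))). Qed.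
Lemma is_d1 g s y : smooth2 g -> is_derive (fun s' => g s' y) s (pd1 g s y).
Proof. intro H. apply Derive_correct. exact (proj1 (proj2 (H nil s y))). Qed.

Section Flow.
Variables (f : R -> R) (phi : R -> R -> R).
Hypothesis hphi : is_flow f phi.

Lemma phi_sm : smooth2 phi. Proof. exact (proj1 hphi). Qed.
Lemma phi0 : phi 0 = fun t => t.
Proof. apply functional_extensionality; intro t. exact (proj1 (proj2 hphi) t). Qed.
Lemma pd1_phi : pd1 phi = fun s t => f (phi s t).
Proof. apply functional_extensionality; intro s; apply functional_extensionality; intro t.
  unfold pd1. apply is_derive_unique. exact (proj2 (proj2 hphi) s t). Qed.

Lemma X1_0 x : pd2 phi 0 x = 1.
Proof. unfold pd2. rewrite phi0. apply is_derive_unique. auto_derive; auto. Qed.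
Lemma X2_0 x : pd2 (pd2 phi) 0 x = 0.
Proof. unfold pd2 at 1. rewrite (Derive_ext _ (fun _ => 1)) by apply X1_0.
  apply is_derive_unique. auto_derive; auto. Qed.
Lemma X3_0 x : pd2 (pd2 (pd2 phi)) 0 x = 0.
Proof. unfold pd2 at 1. rewrite (Derive_ext _ (fun _ => 0)) by apply X2_0.
  apply is_derive_unique. auto_derive; auto. Qed.

Lemma dX1 x : pd1 (pd2 phi) 0 x = Derive_n f 1 x.
Proof. rewrite schwarz_fun by apply phi_sm. rewrite pd1_phi. unfold pd2. rewrite phi0. reflexivity. Qed.
Lemma dX2 x : pd1 (pd2 (pd2 phi)) 0 x = Derive_n f 2 x.
Proof. rewrite schwarz_fun by apply smooth2_pd2, phi_sm. rewrite schwarz_fun by apply phi_sm.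
  rewrite pd1_phi. unfold pd2. rewrite phi0. reflexivity. Qed.
Lemma dX3 x : pd1 (pd2 (pd2 (pd2 phi))) 0 x = Derive_n f 3 x.
Proof. rewrite schwarz_fun by apply smooth2_pd2, smooth2_pd2, phi_sm.
  rewrite schwarz_fun by apply smooth2_pd2, phi_sm. rewrite schwarz_fun by apply phi_sm.
  rewrite pd1_phi. unfold pd2. rewrite phi0. reflexivity. Qed.
End Flow.


Definition Q1 a t := / (1 + (t/a)^2).
Definition Q2 a t := -2 * t / (a^2 * (1 + (t/a)^2)^2).
Definition Q3 a t := (6 * (t/a)^2 - 2) / (a^2 * (1 + (t/a)^2)^3).
Ltac qnz Ha := repeat split; try exact I; try (let H0 := fresh in intro H0; apply Ha; nra).
Lemma Q01 a t : a <> 0 -> is_derive (fun t => a * atan (t/a)) t (Q1 a t).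
Proof. intro Ha. unfold Q1. auto_derive; [exact I|]. field; qnz Ha. Qed.
Lemma Q12 a t : a <> 0 -> is_derive (Q1 a) t (Q2 a t).
Proof. intro Ha. unfold Q1, Q2. auto_derive; [qnz Ha|]. field; qnz Ha. Qed.
Lemma Q23 a t : a <> 0 -> is_derive (Q2 a) t (Q3 a t).
Proof. intro Ha. unfold Q2, Q3. auto_derive; [qnz Ha|]. field; qnz Ha. Qed.

Lemma per_nat f P (hp : periodic P f) n x : f (x + INR n * P) = f x.
Proof. induction n as [|n IH]. - change (INR 0) with 0. rewrite Rmult_0_l, Rplus_0_r; reflexivity.
  - rewrite <- IH. replace (x + INR (S n) * P) with ((x + INR n * P) + P) by (rewrite S_INR; ring). exact (hp _). Qed.
Lemma per_Z f P (hp : periodic P f) (k : Z) x : f (x + IZR k * P) = f x.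
Proof. destruct k as [|p|p].
  - simpl. rewrite Rmult_0_l, Rplus_0_r; reflexivity.
  - rewrite <- positive_nat_Z, <- INR_IZR_INZ. apply per_nat, hp.
  - rewrite <- Pos2Z.opp_pos, opp_IZR, <- positive_nat_Z, <- INR_IZR_INZ.
    rewrite <- (per_nat f P hp (Pos.to_nat p) (x + - INR (Pos.to_nat p) * P)). f_equal; ring.
Qed.
Lemma per_Dn f P (hp : periodic P f) (k : Z) n x : Derive_n f n (x + IZR k * P) = Derive_n f n x.
Proof. rewrite <- Derive_n_comp_trans. apply Derive_n_ext. intro y. apply per_Z, hp. Qed.

Lemma x1_facts a th : 0 < a -> cos (th/a) <> 0 ->
  cos (a * atan (Pa a th / a) / a) <> 0 /\ tan (a * atan (Pa a th / a) / a) = tan (th/a) /\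
  exists k : Z, a * atan (Pa a th / a) = th + IZR k * (a * PI).
Proof.
  intros Ha Hc.
  assert (Ha' : a <> 0) by lra.
  assert (E1 : Pa a th / a = tan (th / a)) by (unfold Pa; field; exact Ha').
  rewrite E1.
  assert (E2 : a * atan (tan (th / a)) / a = atan (tan (th/a))) by (field; exact Ha').
  rewrite E2.
  set (u := atan (tan (th / a))). set (v := th / a).
  assert (Hcu : 0 < cos u) by (apply cos_gt_0; unfold u; destruct (atan_bound (tan (th / a))); lra).
  assert (Htu : tan u = tan v) by (unfold u; apply tan_atan).
  split; [apply Rgt_not_eq; exact Hcu|]. split; [exact Htu|].
  assert (Hsu : sin u = tan u * cos u) by (unfold tan; field; apply Rgt_not_eq; exact Hcu).
  assert (Hsv : sin v = tan v * cos v) by (unfold tan; field; exact Hc).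
  assert (Hs : sin (u - v) = 0) by (rewrite sin_minus, Hsu, Hsv, Htu; ring).
  destruct (sin_eq_0_0 _ Hs) as [k Hk]. exists k.
  replace (a * u) with (a * (u - v) + a * v) by ring. rewrite Hk. unfold v. field. exact Ha'.
Qed.

Lemma sq_pos u : 1 + u ^ 2 <> 0.
Proof. pose proof (pow2_ge_0 u). lra. Qed.

Lemma chain3_mono (V V' : R -> Prop) F F1 F2 F3 : chain3 V F F1 F2 F3 -> (forall y, V' y -> V y) -> chain3 V' F F1 F2 F3.
Proof. intros H HV y Hy. apply H, HV, Hy. Qed.

Lemma cos_div_d a y : is_derive (fun z => cos (z / a)) y (- sin (y / a) / a).
Proof. unfold Rdiv. auto_derive; [exact I|]. ring. Qed.

Lemma part1 c f phi (hf : vector_field c f) (hphi : is_flow f phi) th (Hc : cos (th / aa c) <> 0) :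
  is_derive (fun s => Schw_bold c (phi s) th) 0 (s_formula c f th).
Proof.
  destruct hf as [hs hp].
  assert (Ha := aa_pos c). assert (Ha' := aa_nz c).
  rewrite (s_formula_eq c f hs th Hc).
  assert (HPhi : Phi c = Pa (aa c)) by apply Phi_Pa.
  assert (HQ : Phi_inv c = fun t => aa c * atan (t / aa c)).
  { apply functional_extensionality; intro t; apply Phi_inv_eq. }
  assert (Hlam : lam c th = L1 (aa c) th) by (apply lam_eq, Hc).
  unfold Schw_bold, schwarzian, tilde_map. rewrite HPhi, HQ, Hlam.
  rewrite period_eq in hp.
  set (a := aa c) in *.
  destruct (x1_facts a th Ha Hc) as [Hc1 [Ht1 [k Hk]]].
  set (t0 := Pa a th) in *. set (x1 := a * atan (t0 / a)) in *.
  assert (CQ : chain3 (fun _ => True) (fun t => a * atan (t / a)) (Q1 a) (Q2 a) (Q3 a)).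
  { intros y _. split; [apply Q01|split; [apply Q12|apply Q23]]; auto. }
  assert (CP : chain3 (fun y => cos (y/a) <> 0) (Pa a) (L1 a) (L2 a) (L3 a)).
  { intros y Hy. split; [apply Pa_is|split; [apply L12|apply L23]]; auto. }
  assert (sm := phi_sm f phi hphi).
  assert (CX : forall s, chain3 (fun _ => True) (phi s) (pd2 phi s) (pd2 (pd2 phi) s) (pd2 (pd2 (pd2 phi)) s)).
  { intros s y _. split; [exact (is_d2 phi s y sm) | split;
      [exact (is_d2 _ s y (smooth2_pd2 _ sm)) | exact (is_d2 _ s y (smooth2_pd2 _ (smooth2_pd2 _ sm)))]]. }
  assert (Hp0 : phi 0 x1 = x1) by (rewrite (phi0 f phi hphi); reflexivity).
  assert (N0 : locally 0 (fun s => cos (phi s x1 / a) <> 0)).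
  { apply (locally_neq0 (fun s => cos (phi s x1 / a))).
    - assert (H0 : ex_derive (fun s => cos (phi s x1 / a)) 0).
      { eexists. apply (dcomp (fun y => cos (y / a)) (fun s => phi s x1)).
        + apply cos_div_d.
        + exact (proj2 (proj2 hphi) 0 x1). }
      exact (ex_derive_continuous _ _ H0).
    - rewrite Hp0. exact Hc1. }
  pose (m1 := fun s => L1 a (phi s x1)). pose (m2 := fun s => L2 a (phi s x1)).
  pose (m3 := fun s => L3 a (phi s x1)).
  pose (u1 := fun s => pd2 phi s x1). pose (u2 := fun s => pd2 (pd2 phi) s x1).
  pose (u3 := fun s => pd2 (pd2 (pd2 phi)) s x1).
  pose (q1 := Q1 a t0). pose (q2 := Q2 a t0). pose (q3 := Q3 a t0).
  pose (Sfun := fun s => ((m3 s * (u1 s * q1)^3 + 3 * m2 s * (u1 s * q1) * (u2 s * q1^2 + u1 s * q2)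
      + m1 s * (u3 s * q1^3 + 3 * u2 s * q1 * q2 + u1 s * q3)) / (m1 s * (u1 s * q1))
      - 3/2 * ((m2 s * (u1 s * q1)^2 + m1 s * (u2 s * q1^2 + u1 s * q2)) / (m1 s * (u1 s * q1)))^2)
      * L1 a th ^ 2).
  assert (Heq : locally 0 (fun s => Sfun s = (Derive_n (fun t => Pa a (phi s (a * atan (t / a)))) 3 t0 /
      Derive (fun t => Pa a (phi s (a * atan (t / a)))) t0 -
      3 / 2 * (Derive_n (fun t => Pa a (phi s (a * atan (t / a)))) 2 t0 /
      Derive (fun t => Pa a (phi s (a * atan (t / a)))) t0) ^ 2) * L1 a th ^ 2)).
  { apply (filter_imp (fun s => cos (phi s x1 / a) <> 0)); [intros s Hs | exact N0].
    assert (CY := chain3_comp _ _ _ _ _ _ _ _ _ _ (CX s) CQ (fun _ _ => I)). cbv beta in CY.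
    assert (CY' := chain3_mono _ (fun t => cos (phi s (a * atan (t / a)) / a) <> 0) _ _ _ _ CY (fun _ _ => I)).
    assert (CG := chain3_comp _ _ _ _ _ _ _ _ _ _ CP CY' (fun y Hy => Hy)). cbv beta in CG.
    assert (HV : locally t0 (fun t => cos (phi s (a * atan (t / a)) / a) <> 0)).
    { apply (locally_neq0 (fun t => cos (phi s (a * atan (t / a)) / a))).
      - assert (H0 : ex_derive (fun t => cos (phi s (a * atan (t / a)) / a)) t0).
        { eexists. apply (dcomp (fun y => cos (y / a)) (fun t => phi s (a * atan (t / a)))).
          + apply cos_div_d.
          + exact (proj1 (CY t0 I)). }
        exact (ex_derive_continuous _ _ H0).
      - exact Hs. }
    destruct (chain3_Dn _ _ _ _ _ t0 CG HV) as [E1 [E2 E3]].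
    rewrite E1, E2, E3. unfold Sfun, m1, m2, m3, u1, u2, u3, q1, q2, q3. reflexivity. }
  apply (is_derive_ext_loc Sfun); [exact Heq|].
  assert (hm1 : is_derive m1 0 (L2 a x1 * f x1)).
  { rewrite <- Hp0. apply (dcomp (L1 a) (fun s => phi s x1)).
    + apply L12; auto. rewrite Hp0; exact Hc1.
    + exact (proj2 (proj2 hphi) 0 x1). }
  assert (hm2 : is_derive m2 0 (L3 a x1 * f x1)).
  { rewrite <- Hp0. apply (dcomp (L2 a) (fun s => phi s x1)).
    + apply L23; auto. rewrite Hp0; exact Hc1.
    + exact (proj2 (proj2 hphi) 0 x1). }
  assert (hm3 : is_derive m3 0 (L4 a x1 * f x1)).
  { rewrite <- Hp0. apply (dcomp (L3 a) (fun s => phi s x1)).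
    + apply L34; auto. rewrite Hp0; exact Hc1.
    + exact (proj2 (proj2 hphi) 0 x1). }
  assert (hu1 : is_derive u1 0 (Derive_n f 1 x1)).
  { rewrite <- (dX1 f phi hphi). exact (is_d1 _ 0 x1 (smooth2_pd2 _ sm)). }
  assert (hu2 : is_derive u2 0 (Derive_n f 2 x1)).
  { rewrite <- (dX2 f phi hphi). exact (is_d1 _ 0 x1 (smooth2_pd2 _ (smooth2_pd2 _ sm))). }
  assert (hu3 : is_derive u3 0 (Derive_n f 3 x1)).
  { rewrite <- (dX3 f phi hphi). exact (is_d1 _ 0 x1 (smooth2_pd2 _ (smooth2_pd2 _ (smooth2_pd2 _ sm)))). }
  assert (vm1 : m1 0 = L1 a x1) by (unfold m1; rewrite Hp0; reflexivity).
  assert (vm2 : m2 0 = L2 a x1) by (unfold m2; rewrite Hp0; reflexivity).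
  assert (vm3 : m3 0 = L3 a x1) by (unfold m3; rewrite Hp0; reflexivity).
  assert (vu1 : u1 0 = 1) by apply (X1_0 f phi hphi).
  assert (vu2 : u2 0 = 0) by apply (X2_0 f phi hphi).
  assert (vu3 : u3 0 = 0) by apply (X3_0 f phi hphi).
  assert (eL1 : L1 a x1 = L1 a th) by (unfold L1; rewrite Ht1; reflexivity).
  assert (eL2 : L2 a x1 = L2 a th) by (unfold L2; rewrite Ht1; reflexivity).
  assert (eL3 : L3 a x1 = L3 a th) by (unfold L3; rewrite Ht1; reflexivity).
  assert (eL4 : L4 a x1 = L4 a th) by (unfold L4; rewrite Ht1; reflexivity).
  assert (ef : forall n, Derive_n f n x1 = Derive_n f n th) by (intro n; rewrite Hk; apply per_Dn, hp).
  assert (ef0 : f x1 = f th) by (rewrite Hk; apply per_Z, hp).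
  assert (et0 : t0 / a = tan (th / a)) by (unfold t0, Pa; field; exact Ha').
  assert (eq1 : q1 = / (1 + tan (th / a) ^ 2)) by (unfold q1, Q1; rewrite et0; reflexivity).
  assert (eq2 : q2 = -2 * (a * tan (th / a)) / (a^2 * (1 + tan (th / a) ^ 2)^2))
    by (unfold q2, Q2; rewrite et0; reflexivity).
  assert (eq3 : q3 = (6 * tan (th / a) ^ 2 - 2) / (a^2 * (1 + tan (th / a) ^ 2)^3))
    by (unfold q3, Q3; rewrite et0; reflexivity).
  assert (hL1 : L1 a x1 * q1 <> 0).
  { rewrite eL1, eq1. unfold L1. rewrite Rinv_r; [apply R1_neq_R0 | apply sq_pos]. }
  unfold Sfun. clearbody m1 m2 m3 u1 u2 u3 q1 q2 q3.
  auto_derive.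
  - repeat split; try first [ exact (ex_of _ _ _ hm1) | exact (ex_of _ _ _ hm2) | exact (ex_of _ _ _ hm3)
      | exact (ex_of _ _ _ hu1) | exact (ex_of _ _ _ hu2) | exact (ex_of _ _ _ hu3) ];
    rewrite vm1, vu1, Rmult_1_l; exact hL1.
  - rewrite (D_of _ _ _ hm1), (D_of _ _ _ hm2), (D_of _ _ _ hm3), (D_of _ _ _ hu1), (D_of _ _ _ hu2),
      (D_of _ _ _ hu3), vm1, vm2, vm3, vu1, vu2, vu3, (ef 1%nat), (ef 2%nat), (ef 3%nat), ef0, eL1, eL2, eL3, eL4, eq1, eq2, eq3.
    unfold EE, D2, D1, Dd, A3, A2, A1. unfold fd.
    unfold L1, L2, L3, L4. generalize (tan (th / a)); intro T.
    assert (HT := sq_pos T).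
    field. repeat split; try exact Ha'; try exact HT.
Qed.

Theorem mainTheorem12 (c : pcircle) (f : R -> R) (phi : R -> R -> R)
  (hf : vector_field c f) (hphi : is_flow f phi)
  (th : R) (hth : Phi_finite c th) :
  is_derive (fun s => Schw_bold c (phi s) th) 0 (s_formula c f th) /\
  exists v : R,
    filterlim (fun p : R * R => Lie_g1 c f (fst p) (snd p))
      (within (fun p : R * R => fst p <> snd p) (locally (th, th)))
      (locally v) /\
    s_formula c f th = 3 / 2 * v.
Proof.
  assert (Hc := finite_eq c th hth). split.
  - apply part1; auto.
  - apply part2; [exact (proj1 hf) | exact Hc].
Qed.
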